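(* Let $\mathbf{W}=\langle W;\to,\neg,{}^{+},{}^{-},1\rangle$ be a quasi-Wajsberg* algebra and $0:=1\to 1$. Then for any $x,y\in W$: (1) $0\to(\neg x)^{+}=0\to\neg x^{-}$ and $0\to(\neg x)^{-}=0\to\neg x^{+}$; (2) $0\to x^{+-}=0=0\to x^{-+}$; (3) $0\to x^{++}=0\to x^{+}$ and $0\to x^{--}=0\to x^{-}$; (4) $(\neg x)^{+}\to y=\neg x^{-}\to y$, $x\to(\neg y)^{+}=x\to\neg y^{-}$, $(\neg x)^{-}\to y=\neg x^{+}\to y$ and $x\to(\neg y)^{-}=x\to\neg y^{+}$; (5) $x^{+-}\to y=0\to y=x^{-+}\to y$ and $x\to y^{+-}=x\to 0=x\to y^{-+}$; (6) $x^{++}\to y=x^{+}\to y$, $x\to y^{++}=x\to y^{+}$, $x^{--}\to y=x^{-}\to y$ and $x\to y^{--}=x\to y^{-}$.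
   Context: A quasi-Wajsberg* algebra is an algebra $\langle W;\to,\neg,{}^{+},{}^{-},1\rangle$ of type $\langle2,1,1,1,0\rangle$ such that for all $x,y,z\in W$: (QW*1) $x\to y=\neg y\to\neg x$; (QW*2) $(x\to 1)\to((y\to 1)\to z)=(y\to 1)\to((x\to 1)\to z)$; (QW*3) $(1\to x)\to 1=1$; (QW*4) $(z\to z)\to(x\to y)=x\to y$; (QW*5) $(1\to 1)\to x^{+}=((1\to 1)\to x)^{+}=(x\to 1)\to 1$ and $(1\to 1)\to x^{-}=((1\to 1)\to x)^{-}=(x\to\neg 1)\to\neg 1$; (QW*6) $x\to y=(y^{+}\to x^{-})\to(x^{+}\to y^{-})$; (QW*7) $\neg(x\to y)=y\to x$; (QW*8) $\neg\neg x=x$; (QW*9) $(x\to(\neg x\to y))^{+}=x^{+}\to(\neg x^{+}\to y^{+})$; (QW*10) $x\vee y=y\vee x$; (QW*11) $x\vee(y\vee z)=(x\vee y)\vee z$; (QW*12) $x\to(y\vee z)=(x\to y)\vee(x\to z)$; where $x\vee y:=((x^{+}\to y^{+})^{+}\to(\neg x)^{-})\to((y^{-}\to x^{-})^{-}\to x^{-})$. Conventions: ${}^+,{}^-$ bind tighter than $\neg$, which binds tighter than $\to$ (so $\neg x^{-}$ means $\neg(x^{-})$); $x^{+-}$ means $(x^{+})^{-}$, etc. *)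

(* Defs.v *)
Definition qw_join {W : Type} (imp : W -> W -> W) (neg plus minus : W -> W)
  (x y : W) : W :=
  imp (imp (plus (imp (plus x) (plus y))) (minus (neg x)))
      (imp (minus (imp (minus y) (minus x))) (minus x)).

Definition is_QWstar {W : Type} (imp : W -> W -> W) (neg plus minus : W -> W)
  (one : W) : Prop :=
  let join := qw_join imp neg plus minus in
  (forall x y, imp x y = imp (neg y) (neg x)) /\
  (forall x y z, imp (imp x one) (imp (imp y one) z)
               = imp (imp y one) (imp (imp x one) z)) /\
  (forall x, imp (imp one x) one = one) /\
  (forall x y z, imp (imp z z) (imp x y) = imp x y) /\
  (forall x, imp (imp one one) (plus x) = plus (imp (imp one one) x) /\
             plus (imp (imp one one) x) = imp (imp x one) one) /\
  (forall x, imp (imp one one) (minus x) = minus (imp (imp one one) x) /\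
             minus (imp (imp one one) x) = imp (imp x (neg one)) (neg one)) /\
  (forall x y, imp x y = imp (imp (plus y) (minus x)) (imp (plus x) (minus y))) /\
  (forall x y, neg (imp x y) = imp y x) /\
  (forall x, neg (neg x) = x) /\
  (forall x y, plus (imp x (imp (neg x) y))
             = imp (plus x) (imp (neg (plus x)) (plus y))) /\
  (forall x y, join x y = join y x) /\
  (forall x y z, join x (join y z) = join (join x y) z) /\
  (forall x y z, imp x (join y z) = join (imp x y) (imp x z)).

(* Main.v *)
Require Import Defs.

Theorem proposition3p4 (W : Type) (imp : W -> W -> W) (neg plus minus : W -> W)
  (one : W) (HW : is_QWstar imp neg plus minus one) :
  let zero := imp one one in
  forall x y : W,
  (* (1) *)
  (imp zero (plus (neg x)) = imp zero (neg (minus x)) /\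
   imp zero (minus (neg x)) = imp zero (neg (plus x))) /\
  (* (2) *)
  (imp zero (minus (plus x)) = zero /\ zero = imp zero (plus (minus x))) /\
  (* (3) *)
  (imp zero (plus (plus x)) = imp zero (plus x) /\
   imp zero (minus (minus x)) = imp zero (minus x)) /\
  (* (4) *)
  (imp (plus (neg x)) y = imp (neg (minus x)) y /\
   imp x (plus (neg y)) = imp x (neg (minus y)) /\
   imp (minus (neg x)) y = imp (neg (plus x)) y /\
   imp x (minus (neg y)) = imp x (neg (plus y))) /\
  (* (5) *)
  (imp (minus (plus x)) y = imp zero y /\ imp zero y = imp (plus (minus x)) y /\
   imp x (minus (plus y)) = imp x zero /\ imp x zero = imp x (plus (minus y))) /\
  (* (6) *)
  (imp (plus (plus x)) y = imp (plus x) y /\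
   imp x (plus (plus y)) = imp x (plus y) /\
   imp (minus (minus x)) y = imp (minus x) y /\
   imp x (minus (minus y)) = imp x (minus y)).
Proof.
  unfold is_QWstar in HW; cbv zeta in HW.
  destruct HW as (H1 & H2 & H3 & H4 & H5p & H5m & H6 & H7 & H8 & H9 & H10 & H11 & H12).
  cbv zeta; intros x y.
  assert (F1 : forall a b, imp (imp one one) (imp a b) = imp a b) by (intros; apply H4).
  assert (neg0 : neg (imp one one) = imp one one) by apply H7.
  assert (zz : forall z, imp z z = imp one one).
  { intro z. pose proof (H4 one one z) as E.
    rewrite (H1 (imp z z) (imp one one)), neg0, (H7 z z), (F1 z z) in E. exact E. }
  assert (O1 : imp (imp one one) one = one) by apply H3.
  assert (n1 : imp one (imp one one) = neg one).
  { rewrite <- (H7 (imp one one) one), O1. reflexivity. }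
  assert (m1one : imp (neg one) one = one).
  { pose proof (H3 (imp one one)) as E. rewrite n1 in E. exact E. }
  assert (negr : forall a, imp (imp one one) (neg a) = neg (imp (imp one one) a)).
  { intro a. rewrite (H1 (imp one one) (neg a)), H8, neg0, (H7 (imp one one) a). reflexivity. }
  assert (p5 : forall a, imp (imp one one) (plus a) = imp (imp a one) one)
    by (intro a; exact (eq_trans (proj1 (H5p a)) (proj2 (H5p a)))).
  assert (m5 : forall a, imp (imp one one) (minus a) = imp (imp a (neg one)) (neg one))
    by (intro a; exact (eq_trans (proj1 (H5m a)) (proj2 (H5m a)))).
  assert (plusreg : forall a b, plus (imp a b) = imp (imp (imp a b) one) one).
  { intros a b. pose proof (proj2 (H5p (imp a b))) as E. rewrite (F1 a b) in E. exact E. }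
  assert (minusreg : forall a b, minus (imp a b) = imp (imp (imp a b) (neg one)) (neg one)).
  { intros a b. pose proof (proj2 (H5m (imp a b))) as E. rewrite (F1 a b) in E. exact E. }
  assert (plus1 : plus one = one).
  { pose proof (proj2 (H5p one)) as E. rewrite O1 in E. exact E. }
  assert (minus1 : minus one = imp one one).
  { pose proof (proj2 (H5m one)) as E. rewrite O1 in E. rewrite E.
    rewrite (H1 (imp one (neg one)) (neg one)), H8, (H7 one (neg one)), m1one. reflexivity. }
  assert (plusO : plus (imp one one) = imp one one).
  { rewrite (plusreg one one), O1. reflexivity. }
  assert (minusO : minus (imp one one) = imp one one).
  { rewrite (minusreg one one), (negr one), O1. apply zz. }
  assert (join_self : forall u, qw_join imp neg plus minus u u = imp (imp one one) u).
  { intro u. unfold qw_join. rewrite (zz (plus u)), plusO, (zz (minus u)), minusO.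
    rewrite (H6 (imp one one) u), plusO, minusO.
    rewrite (m5 (neg u)), (m5 u).
    rewrite <- (H1 one u).
    rewrite (H1 (imp one u) (neg one)), H8, (H7 one u).
    rewrite <- (H7 (imp one one) (plus u)), (p5 u), (H7 (imp u one) one).
    reflexivity. }
  assert (R : forall a b, imp a (imp (imp one one) b) = imp a b).
  { intros a b. pose proof (H12 a b b) as E. rewrite !join_self, F1 in E. exact E. }
  assert (L : forall a b, imp (imp (imp one one) a) b = imp a b).
  { intros a b. rewrite (H1 (imp (imp one one) a) b), (H7 (imp one one) a).
    assert (E : imp a (imp one one) = imp (imp one one) (neg a)).
    { rewrite negr, (H7 (imp one one) a). reflexivity. }
    rewrite E, R, <- (H1 a b). reflexivity. }
  assert (T3 : forall y, imp (imp (imp y one) one) one = imp y one).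
  { intro y0. pose proof (H6 y0 one) as E. rewrite plus1, minus1 in E.
    rewrite <- (H7 (imp one one) (plus y0)), (p5 y0) in E.
    rewrite (H1 (imp one (minus y0)) (neg (imp (imp y0 one) one))), H8, (H7 one (minus y0)) in E.
    rewrite <- (L (minus y0) one), (m5 y0) in E.
    rewrite (H1 (imp y0 (neg one)) (neg one)), H8, (H7 y0 (neg one)), (H3 (imp (neg one) y0)) in E.
    symmetry. exact E. }
  assert (Sdef : forall y, imp y (neg one) = neg (imp (neg y) one)).
  { intro y0. rewrite (H1 y0 (neg one)), H8, H7. reflexivity. }
  assert (S3 : forall y, imp (imp (imp y (neg one)) (neg one)) (neg one) = imp y (neg one)).
  { intro y0. rewrite !Sdef, !H8, T3. reflexivity. }
  assert (P1a : forall x, imp (imp one one) (plus (neg x)) = imp (imp one one) (neg (minus x))).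
  { intro x0. rewrite (p5 (neg x0)), (negr (minus x0)), (m5 x0), (H7 (imp x0 (neg one)) (neg one)).
    rewrite (H1 (imp (neg x0) one) one), (H7 (neg x0) one).
    rewrite (H1 x0 (neg one)), H8. reflexivity. }
  assert (P1b : forall x, imp (imp one one) (minus (neg x)) = imp (imp one one) (neg (plus x))).
  { intro x0. rewrite (m5 (neg x0)), (negr (plus x0)), (p5 x0), (H7 (imp x0 one) one).
    rewrite <- (H1 one x0), (H1 (imp one x0) (neg one)), H8, (H7 one x0). reflexivity. }
  assert (P2a : forall x, imp (imp one one) (minus (plus x)) = imp one one).
  { intro x0. rewrite (proj1 (H5m (plus x0))), (p5 x0), minusreg.
    rewrite (H1 (imp (imp (imp x0 one) one) (neg one)) (neg one)), H8,
      (H7 (imp (imp x0 one) one) (neg one)).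
    rewrite (H1 (neg one) (imp (imp x0 one) one)), H8, (H7 (imp x0 one) one), H3.
    reflexivity. }
  assert (P2b : forall x, imp one one = imp (imp one one) (plus (minus x))).
  { intro x0. rewrite (proj1 (H5p (minus x0))), (m5 x0), plusreg.
    rewrite (H1 (imp x0 (neg one)) (neg one)), H8, (H7 x0 (neg one)), H3. reflexivity. }
  assert (P3a : forall x, imp (imp one one) (plus (plus x)) = imp (imp one one) (plus x)).
  { intro x0. rewrite (proj1 (H5p (plus x0))), (p5 x0), plusreg, T3. reflexivity. }
  assert (P3b : forall x, imp (imp one one) (minus (minus x)) = imp (imp one one) (minus x)).
  { intro x0. rewrite (proj1 (H5m (minus x0))), (m5 x0), minusreg, S3. reflexivity. }
  split; [split; auto|].
  split; [split; auto|].
  split; [split; auto|].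
  split; [repeat split|].
  { rewrite <- (L (plus (neg x)) y), P1a, L. reflexivity. }
  { rewrite <- (R x (plus (neg y))), P1a, R. reflexivity. }
  { rewrite <- (L (minus (neg x)) y), P1b, L. reflexivity. }
  { rewrite <- (R x (minus (neg y))), P1b, R. reflexivity. }
  split; [repeat split|].
  { rewrite <- (L (minus (plus x)) y), P2a. reflexivity. }
  { rewrite <- (L (plus (minus x)) y), <- P2b. reflexivity. }
  { rewrite <- (R x (minus (plus y))), P2a. reflexivity. }
  { rewrite <- (R x (plus (minus y))), <- P2b. reflexivity. }
  repeat split.
  { rewrite <- (L (plus (plus x)) y), P3a, L. reflexivity. }
  { rewrite <- (R x (plus (plus y))), P3a, R. reflexivity. }
  { rewrite <- (L (minus (minus x)) y), P3b, L. reflexivity. }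
  { rewrite <- (R x (minus (minus y))), P3b, R. reflexivity. }
Qed.
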